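(* Let $G$ be a finite simple graph on $[n]$, $w:E(G)\to\mathbb Z_{>0}$ a weight function, $\Bbbk$ a field, $S=\Bbbk[x_1,\ldots,x_n]$ and $I(G_w)=\big((x_ix_j)^{w(i,j)}\mid\{i,j\}\in E(G)\big)$. Assume $J=\sqrt{I(G_w):x^{\mathbf a}}$ is an associated radical of $I(G_w)$ and $K$ is an associated radical of $J$. Then $K$ is also an associated radical of $I(G_w)$.
   Context: For a monomial ideal $I$, an associated radical of $I$ is an ideal of the form $\sqrt{I:f}$ with $f$ a monomial not in $I$. *)

(* Defs.v *)
From HB Require Import structures.
From mathcomp Require Import all_boot all_order all_algebra.
From mathcomp Require Import mpoly.
Set Implicit Arguments. Unset Strict Implicit. Unset Printing Implicit Defensive.
Import GRing.Theory.
Local Open Scope ring_scope.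

Definition ideal_of (k : fieldType) (n : nat) := {mpoly k[n]} -> Prop.

Definition colon (k : fieldType) (n : nat) (I : ideal_of k n) (f : {mpoly k[n]})
  : ideal_of k n := fun p => I (p * f).

Definition radical (k : fieldType) (n : nat) (I : ideal_of k n) : ideal_of k n :=
  fun p => exists m : nat, I (p ^+ m).

Definition assoc_radical (k : fieldType) (n : nat) (I K : ideal_of k n) : Prop :=
  exists a : 'X_{1..n}, ~ I 'X_[a] /\ forall p, K p <-> radical (colon I 'X_[a]) p.

Definition weighted_edge_ideal (k : fieldType) (n : nat) (e : rel 'I_n)
  (w : 'I_n -> 'I_n -> nat) : ideal_of k n :=
  fun p => exists c : 'I_n -> 'I_n -> {mpoly k[n]},
    p = \sum_(i < n) \sum_(j < n | e i j) c i j * ('X_i * 'X_j) ^+ (w i j).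

(* Main.v *)
Require Import Defs.
From mathcomp Require Import all_boot all_order all_algebra.
From mathcomp Require Import mpoly.
Set Implicit Arguments. Unset Strict Implicit. Unset Printing Implicit Defensive.
Import GRing.Theory.
Local Open Scope ring_scope.

Section S.
Variables (k : fieldType) (n : nat) (e : rel 'I_n) (w : 'I_n -> 'I_n -> nat).
Local Notation I := (@weighted_edge_ideal k n e w).
Definition gm (i j : 'I_n) : 'X_{1..n} := ((U_(i) + U_(j)) *+ w i j)%MM.

Lemma gmE i j : ('X_i * 'X_j : {mpoly k[n]}) ^+ w i j = 'X_[gm i j].
Proof. by rewrite /gm -mpolyXn mpolyXD. Qed.

Lemma I0 : I 0.
Proof. exists (fun _ _ => 0); by rewrite big1 // => i _; rewrite big1 // => j _; rewrite mul0r. Qed.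

Lemma ID f g : I f -> I g -> I (f + g).
Proof.
move=> [c ->] [d ->]; exists (fun i j => c i j + d i j).
rewrite -big_split; apply: eq_bigr => i _; rewrite -big_split; apply: eq_bigr => j _.
by rewrite mulrDl.
Qed.

Lemma IM h f : I f -> I (h * f).
Proof.
move=> [c ->]; exists (fun i j => h * c i j).
rewrite mulr_sumr; apply: eq_bigr => i _; rewrite mulr_sumr; apply: eq_bigr => j _.
by rewrite mulrA.
Qed.

Lemma IZ a f : I f -> I (a *: f).
Proof. by move=> H; rewrite -mul_mpolyC; apply: IM. Qed.

Lemma IX i j (m : 'X_{1..n}) : e i j -> (forall t, gm i j t <= m t)%N -> I 'X_[m].
Proof.
move=> eij le.
have -> : m = ((m - gm i j) + gm i j)%MM by rewrite submK //; apply/mnm_lepP.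
rewrite mpolyXD; apply: IM.
exists (fun i' j' => if (i' == i) && (j' == j) then 1 else 0).
rewrite (bigD1 i) //= (bigD1 j) //= !eqxx /= mul1r gmE.
rewrite big1 ?addr0; last by move=> j' /andP[_ /negbTE ->]; rewrite ?andbF ?mul0r.
rewrite big1 ?addr0 // => i' /negbTE Hi; rewrite big1 // => j' _; by rewrite Hi /= mul0r.
Qed.

Definition good (m : 'X_{1..n}) := exists i j, e i j /\ forall t, (gm i j t <= m t)%N.

Lemma I_of_good f : (forall m, m \in msupp f -> good m) -> I f.
Proof.
move=> H; rewrite (mpolyE f).
elim: (msupp f) H => [|m s IH] H; first by rewrite big_nil; exact: I0.
rewrite big_cons; apply: ID; last by apply: IH => m' Hm'; apply: H; rewrite inE Hm' orbT.
apply: IZ; have [i [j [eij le]]] := H m (mem_head _ _); exact: IX eij le.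
Qed.

Lemma good_of_I f m : I f -> m \in msupp f -> good m.
Proof.
move=> [c ->] /msupp_sum_le /flattenP [s /mapP [i _ ->]] /msupp_sum_le /flattenP [s' /mapP [j]].
rewrite mem_filter => /andP [eij _] -> Hm.
exists i, j; split => //.
move: Hm; rewrite gmE (perm_mem (msuppMX _ _)) => /mapP [m' _ ->] t.
by rewrite mnmDE leq_addr.
Qed.

Definition Wb := (\max_(i < n) \max_(j < n) w i j)%N.

Lemma gm_le i j t : (gm i j t <= 2 * Wb)%N.
Proof.
rewrite /gm mulmnE mnmDE !mnm1E.
have hw : (w i j <= Wb)%N.
  apply: leq_trans (leq_bigmax i); exact: (leq_bigmax (F := fun j => w i j) j).
apply: leq_mul; last exact: hw.
by case: (i == t); case: (j == t).
Qed.

Lemma colon_stab q (c d : 'X_{1..n}) :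
  (forall t, (0 < d t)%N -> (2 * Wb <= c t)%N) ->
  I (q * 'X_[c + d]) -> I (q * 'X_[c]).
Proof.
move=> hcd H; apply: I_of_good => m.
rewrite (perm_mem (msuppMX _ _)) => /mapP [u Hu ->].
have Hm : ((c + d) + u)%MM \in msupp (q * 'X_[c + d]).
  by rewrite mcoeff_msupp mcoeffMX -mcoeff_msupp.
have [i [j [eij le]]] := good_of_I H Hm.
exists i, j; split => // t; have := le t; rewrite !mnmDE.
case: (posnP (d t)) => [-> | /hcd hc _]; first by rewrite addn0.
exact: leq_trans (gm_le i j t) (leq_trans hc (leq_addr _ _)).
Qed.

Lemma powE (p : {mpoly k[n]}) (a b : 'X_{1..n}) m l :
  (p ^+ m * 'X_[b]) ^+ l * 'X_[a] = p ^+ (m * l) * 'X_[a + b *+ l].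
Proof.
by rewrite exprMn -exprM mpolyXn -mulrA -mpolyXD addmC.
Qed.
End S.

Theorem lemma2p14 (k : fieldType) (n : nat) (e : rel 'I_n)
  (w : 'I_n -> 'I_n -> nat)
  (e_sym : forall i j, e i j = e j i) (e_irr : forall i, ~~ e i i)
  (w_sym : forall i j, w i j = w j i)
  (w_pos : forall i j, e i j -> (0 < w i j)%N)
  (J K : ideal_of k n) :
  assoc_radical (@weighted_edge_ideal k n e w) J ->
  assoc_radical J K ->
  assoc_radical (@weighted_edge_ideal k n e w) K.
Proof.
move=> [a [nIa HJ]] [b [nJb HK]].
set N := (2 * Wb w).+1.
exists (a + b *+ N)%MM; split.
  move=> H; apply: nJb; apply/HJ; exists N; rewrite /colon.
  by rewrite mpolyXn -mpolyXD addmC.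
move=> p; rewrite HK; split.
  move=> [m /HJ [l]]; rewrite /colon powE => H.
  exists (m * l)%N; rewrite /colon.
  apply: (@colon_stab _ _ _ _ _ _ (b *+ l)%MM).
    move=> t; rewrite mulmnE mnmDE mulmnE => ht.
    apply: leq_trans (leq_addl _ _).
    have hb : (0 < b t)%N by move: ht; rewrite muln_gt0 => /andP[].
    apply: leq_trans (leqnSn _) _; exact: leq_pmull hb.
  move: (IM 'X_[b *+ N] H); rewrite mulrCA -mpolyXD.
  by rewrite addmA [X in (X + _)%MM]addmC.
move=> [m H]; exists m; apply/HJ; exists N; rewrite /colon powE.
have -> : (m * N = m * (N - 1) + m)%N by rewrite -mulnSr subn1.
by rewrite exprD -mulrA; apply: IM.
Qed.
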